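(* Let $n\ge 2$ and $1\le r\le n$. Then for every vertex $v\in V(P_n^* )$, $$|\mathcal{I}^{(r)}_v(P_n^* )|\le |\mathcal{I}^{(r)}_{p_2}(P_n^* )| = |\mathcal{I}^{(r)}_{p_{n-1}}(P_n^* )|,$$ i.e. the $r$-stars centred at the pendant vertices $p_2$ and $p_{n-1}$ are $r$-stars of maximum size in $P_n^*$.
   Context: An independent $r$-set of a graph $G$ is a set of $r$ pairwise non-adjacent vertices; $\mathcal{I}^{(r)}(G)$ is the family of independent $r$-sets of $G$, and $\mathcal{I}^{(r)}_v(G)$ the subfamily of those containing $v$ (the $r$-star centred at $v$). For a graph $G$ with vertices $x_1,\dots,x_n$, the pendant graph $G^*$ has vertex set $\{x_1,\dots,x_n\}\sqcup\{p_1,\dots,p_n\}$ and edge set $E(G)\sqcup\{x_1p_1,\dots,x_np_n\}$. $P_n$ is the path with vertices $x_1,\dots,x_n$ and edges $x_ix_{i+1}$, $1\le i\le n-1$, and $P_n^*$ is its pendant graph. *)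

(* Defs.v *)
From mathcomp Require Import all_boot.
Set Implicit Arguments. Unset Strict Implicit. Unset Printing Implicit Defensive.

(* Vertices of the pendant path P_n^*: inl i is x_(i+1), inr i is p_(i+1). *)
Definition pvert (n : nat) : finType := ('I_n + 'I_n)%type.

Definition path_adj (n : nat) (i j : 'I_n) : bool :=
  (i.+1 == j :> nat) || (j.+1 == i :> nat).

Definition pendant_adj (n : nat) (u w : pvert n) : bool :=
  match u, w with
  | inl i, inl j => path_adj i j
  | inl i, inr j => i == j
  | inr i, inl j => i == j
  | inr _, inr _ => false
  end.

Definition independent (T : finType) (e : rel T) (S : {set T}) : bool :=
  [forall x in S, forall y in S, ~~ e x y].

Definition indep_rsets (T : finType) (e : rel T) (r : nat) : {set {set T}} :=
  [set S : {set T} | independent e S && (#|S| == r)].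

Definition rstar (T : finType) (e : rel T) (r : nat) (v : T) : {set {set T}} :=
  [set S in indep_rsets e r | v \in S].

(* For 2 <= n: the pendant vertices p_2 (index 1) and p_(n-1) (index n-2). *)
Lemma two_idx_lt (n : nat) : 2 <= n -> 1 < n.
Proof. by []. Qed.
Lemma nm2_idx_lt (n : nat) : 2 <= n -> n - 2 < n.
Proof. by case: n => [|[|n]] //= _; rewrite subn2 /= ltnS leqnSn. Qed.
Definition p_two (n : nat) (hn : 2 <= n) : pvert n := inr (Ordinal (two_idx_lt hn)).
Definition p_nm1 (n : nat) (hn : 2 <= n) : pvert n := inr (Ordinal (nm2_idx_lt hn)).

(* Main.v *)
Require Import Defs.
From mathcomp Require Import all_boot zify.
Set Implicit Arguments. Unset Strict Implicit. Unset Printing Implicit Defensive.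

Ltac ifs := repeat match goal with |- context [if ?b then _ else _] => case: (boolP b) end.

Definition nadj (a b : nat) := (a.+1 == b) || (b.+1 == a).
Definition relab n (f : nat -> nat) (k : 'I_n) : 'I_n := insubd k (f k).
Definition liftv n f (u : pvert n) : pvert n :=
  match u with inl k => inl (relab f k) | inr k => inr (relab f k) end.

Lemma rstarE (T:finType) (e:rel T) r v S :
  (S \in rstar e r v) = [&& independent e S, #|S| == r & v \in S].
Proof. by rewrite !inE andbA. Qed.

Lemma indepP (T:finType) (e:rel T) (S : {set T}) :
  reflect (forall x y, x \in S -> y \in S -> ~~ e x y) (independent e S).
Proof.
apply: (iffP forallP) => [H x y xS yS | H x].
  by move: (H x); rewrite xS => /forallP/(_ y); rewrite yS.
apply/implyP => xS; apply/forallP => y; apply/implyP => yS; exact: H.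
Qed.

Lemma star_le (T:finType) (e:rel T) r v w (g : {set T} -> {set T}) :
  (forall S, S \in rstar e r v -> g S \in rstar e r w) ->
  {in rstar e r v &, injective g} -> #|rstar e r v| <= #|rstar e r w|.
Proof.
move=> Hg Hi; rewrite -(card_in_imset Hi); apply: subset_leq_card.
by apply/subsetP => _ /imsetP[S HS ->]; apply: Hg.
Qed.

Section Relab.
Variables (n : nat) (f : nat -> nat).
Hypothesis Hr : forall k : 'I_n, f k < n.
Hypothesis Hi : forall j k : 'I_n, f j = f k -> j = k :> nat.

Lemma relabE (k : 'I_n) : val (relab f k) = f k.
Proof. by rewrite /relab insubdK //; apply: Hr. Qed.

Lemma relab_inj : injective (@relab n f).
Proof. by move=> j k /(congr1 val); rewrite !relabE => /Hi /val_inj. Qed.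

Lemma liftv_inj : injective (@liftv n f).
Proof.
by case=> [j|j] [k|k] //= [] /relab_inj ->.
Qed.

Lemma mapS_indep S : independent (@pendant_adj n) S ->
  (forall j k : 'I_n, inl j \in S -> inl k \in S -> ~~ nadj (f j) (f k)) ->
  independent (@pendant_adj n) (liftv f @: S).
Proof.
move=> /indepP HS Hadj; apply/indepP => _ _ /imsetP[a aS ->] /imsetP[b bS ->].
case: a aS => [j|j] jS; case: b bS => [k|k] kS //=.
- by rewrite /path_adj !relabE; apply: Hadj.
- apply/negP => /eqP /relab_inj Ejk; subst k.
  by move: (HS _ _ jS kS); rewrite /= eqxx.
- apply/negP => /eqP /relab_inj Ejk; subst k.
  by move: (HS _ _ jS kS); rewrite /= eqxx.
Qed.

Lemma mapS_card (S : {set pvert n}) : #|@liftv n f @: S| = #|S|.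
Proof. by rewrite card_imset //; apply: liftv_inj. Qed.

Lemma mapS_in r v S : S \in rstar (@pendant_adj n) r v ->
  (forall j k : 'I_n, inl j \in S -> inl k \in S -> ~~ nadj (f j) (f k)) ->
  liftv f @: S \in rstar (@pendant_adj n) r (liftv f v).
Proof.
rewrite !rstarE => /and3P[HI Hc Hv] Hadj.
by rewrite mapS_card Hc mapS_indep // imset_f.
Qed.

Lemma mapS_injS : injective (fun S : {set pvert n} => liftv f @: S).
Proof. apply: imset_inj; exact: liftv_inj. Qed.

End Relab.

Notation R n r v := (rstar (@pendant_adj n) r v).

Lemma pend_notin n r (i : 'I_n) S : S \in R n r (inl i) -> inr i \notin S.
Proof.
rewrite rstarE => /and3P[/indepP HI _ Hv]; apply/negP => Hw.
by move: (HI _ _ Hv Hw); rewrite /= eqxx.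
Qed.

Lemma stepA n r (i : 'I_n) : #|R n r (inl i)| <= #|R n r (inr i)|.
Proof.
apply: (@star_le _ _ _ _ _ (fun S => inr i |: (S :\ inl i))).
  move=> S HS; have Hn := pend_notin HS; move: HS.
  rewrite !rstarE => /and3P[/indepP HI /eqP Hc Hv].
  rewrite setU11 andbT; apply/andP; split.
    apply/indepP => x y; rewrite !inE.
    case/predU1P=> [Ex|/andP[xi xS]]; case/predU1P=> [Ey|/andP[yi yS]]; subst => //.
    - by case: y yi yS => // k ki _ /=; apply: contra ki => /eqP ->.
    - exact: HI.
  rewrite cardsU1 !inE /= Hn.
  by rewrite -Hc (cardsD1 (inl i) S) Hv add1n.
move=> S1 S2 H1 H2 E.
have K S : S \in R n r (inl i) -> inl i |: ((inr i |: (S :\ inl i)) :\ inr i) = S.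
  move=> HS; rewrite setU1K; last by rewrite !inE negb_and (pend_notin HS) orbT.
  by apply: setD1K; move: HS; rewrite rstarE => /and3P[].
by rewrite -(K _ H1) E K.
Qed.

Lemma relab_le n r (f : nat -> nat) v w :
  (forall k : 'I_n, f k < n) -> (forall j k : 'I_n, f j = f k -> j = k :> nat) ->
  liftv f v = w ->
  (forall S, S \in R n r v -> forall j k : 'I_n,
      inl j \in S -> inl k \in S -> ~~ nadj (f j) (f k)) ->
  #|R n r v| <= #|R n r w|.
Proof.
move=> Hr Hi <- Hadj; apply: (@star_le _ _ _ _ _ (fun S => liftv f @: S)).
  by move=> S HS; apply: mapS_in => //; apply: Hadj.
by move=> S1 S2 _ _; apply: mapS_injS.
Qed.

Lemma adjS n r v S (j k : 'I_n) : S \in R n r v -> inl j \in S -> inl k \in S -> ~~ nadj j k.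
Proof. by rewrite rstarE => /and3P[/indepP HI _ _] jS kS; apply: (HI _ _ jS kS). Qed.

Lemma pendS n r v S (j k : 'I_n) : S \in R n r v -> inl j \in S -> inr k \in S -> j != k :> nat.
Proof.
rewrite rstarE => /and3P[/indepP HI _ _] jS kS; move: (HI _ _ jS kS) => /=.
by apply: contra => /eqP /val_inj ->.
Qed.

Lemma vS n r v S : S \in R n r v -> v \in S.
Proof. by rewrite rstarE => /and3P[]. Qed.

Lemma imset_inl n f (S : {set pvert n}) u : inl u \in liftv f @: S ->
  exists j, inl j \in S /\ relab f j = u.
Proof. by case/imsetP => -[j|j] jS //= [E]; exists j. Qed.

Lemma stepRev n r (hn : 2 <= n) (a b : 'I_n) : val a = 1 -> val b = n - 2 ->
  #|R n r (inr a)| <= #|R n r (inr b)| /\ #|R n r (inr b)| <= #|R n r (inr a)|.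
Proof.
move=> Ea Eb.
have Hr : forall k : 'I_n, n.-1 - k < n by move=> k; have := ltn_ord k; lia.
have Hi : forall j k : 'I_n, n.-1 - j = n.-1 - k -> j = k :> nat.
  by move=> j k; have := ltn_ord j; have := ltn_ord k; lia.
have Had : forall S (v : pvert n), S \in R n r v -> forall j k : 'I_n,
      inl j \in S -> inl k \in S -> ~~ nadj (n.-1 - j) (n.-1 - k).
  move=> S v HS j k jS kS; have := adjS HS jS kS; rewrite /nadj.
  by have := ltn_ord j; have := ltn_ord k; lia.
split; (apply: (relab_le Hr Hi); last by move=> S HS; apply: Had HS); congr inr; apply: val_inj; rewrite relabE //= Ea Eb; lia.
Qed.

Definition f0 (k : nat) := if k == 0 then 1 else if k == 1 then 0 else k.

Lemma stepSwap n r (hn : 2 <= n) (a b : 'I_n) : val a = 0 -> val b = 1 ->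
  #|R n r (inr a)| <= #|R n r (inr b)|.
Proof.
move=> Ea Eb.
have Hr : forall k : 'I_n, f0 k < n by move=> k; have := ltn_ord k; rewrite /f0; ifs; lia.
have Hi : forall j k : 'I_n, f0 j = f0 k -> j = k :> nat.
  by move=> j k; rewrite /f0; ifs; lia.
apply: (relab_le Hr Hi).
  by congr inr; apply: val_inj; rewrite relabE // /f0 Ea.
move=> S HS j k jS kS; have := adjS HS jS kS.
have := pendS HS jS (vS HS); have := pendS HS kS (vS HS).
by rewrite /nadj /f0 Ea; ifs; lia.
Qed.

Definition f1 (i k : nat) :=
  if k == 0 then 0 else if k == i then 1 else if k < i then k.+1 else k.
Definition f2 (i k : nat) :=
  if k == i.-1 then 0 else if k == i then 1 else if k == i.+1 then 2
  else if k < i.-1 then i.+1 - k else k.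
Lemma f1_adj i j k : 2 <= i -> j <> i -> k <> i -> j.+1 <> k -> k.+1 <> j ->
  ~ (j.+1 = i /\ k = i.+1) -> ~ (k.+1 = i /\ j = i.+1) -> ~~ nadj (f1 i j) (f1 i k).
Proof. move=> *; rewrite /nadj /f1; ifs; lia. Qed.
Lemma f2_adj i j k : 2 <= i -> j <> i -> k <> i -> j.+1 <> k -> k.+1 <> j ->
  j.+2 <> i -> k.+2 <> i -> j <> i.+2 -> k <> i.+2 -> ~~ nadj (f2 i j) (f2 i k).
Proof. move=> *; rewrite /nadj /f2; ifs; lia. Qed.
Lemma cross_nat i j k : 2 <= i -> f1 i j = 0 -> f1 i k = 2 -> j.+1 = k.
Proof. rewrite /f1; ifs; lia. Qed.
Lemma f2_0 i : 2 <= i -> f2 i i.-1 = 0.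
Proof. by rewrite /f2 eqxx. Qed.
Lemma f2_2 i : 2 <= i -> f2 i i.+1 = 2.
Proof. rewrite /f2; ifs; lia. Qed.

Lemma stepC n r (i b : 'I_n) : 2 <= i -> val b = 1 ->
  #|R n r (inr i)| <= #|R n r (inr b)|.
Proof.
move=> Hi2 Eb.
pose case2 (S : {set pvert n}) := [exists j : 'I_n, exists k : 'I_n,
   [&& inl j \in S, inl k \in S, j.+1 == i :> nat & k == i.+1 :> nat]].
have Hr1 : forall k : 'I_n, f1 i k < n.
  by move=> k; have := ltn_ord k; have := ltn_ord i; rewrite /f1; ifs; lia.
have Hi1 : forall j k : 'I_n, f1 i j = f1 i k -> j = k :> nat.
  by move=> j k; rewrite /f1; ifs; lia.
have Hr2 : i.+1 < n -> forall k : 'I_n, f2 i k < n.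
  by move=> H k; have := ltn_ord k; rewrite /f2; ifs; lia.
have Hi2' : forall j k : 'I_n, f2 i j = f2 i k -> j = k :> nat.
  by move=> j k; rewrite /f2; ifs; lia.
have C2P : forall S, case2 S -> exists j k : 'I_n,
    [/\ inl j \in S, inl k \in S, j.+1 = i & k = i.+1 :> nat].
  move=> S /existsP[j /existsP[k /and4P[jS kS /eqP E1 /eqP E2]]].
  by exists j, k.
apply: (@star_le _ _ _ _ _ (fun S => if case2 S then liftv (f2 i) @: S
                                     else liftv (f1 i) @: S)).
  move=> S HS; have Hv := vS HS; case: ifP => C.
    have [j0 [k0 [j0S k0S Ej0 Ek0]]] := C2P S C.
    have Hk : i.+1 < n by rewrite -Ek0.
    have -> : inr b = liftv (f2 i) (inr i).
      congr inr; apply: val_inj; rewrite (relabE (Hr2 Hk)) Eb /f2.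
      by rewrite (_ : (i == i.-1 :> nat) = false) ?eqxx //; lia.
    apply: mapS_in => //; first exact: Hr2.
    move=> j k jS kS.
    move: (adjS HS jS kS) (adjS HS jS j0S) (adjS HS jS k0S).
    move: (adjS HS kS j0S) (adjS HS kS k0S) (pendS HS jS Hv) (pendS HS kS Hv).
    rewrite /nadj => A1 A2 A3 A4 A5 A6 A7.
    apply: f2_adj => //; lia.
  have -> : inr b = liftv (f1 i) (inr i).
    congr inr; apply: val_inj; rewrite relabE ?Eb // /f1 eqxx.
    by rewrite (_ : (i == 0 :> nat) = false) //; lia.
  apply: mapS_in => //.
  move=> j k jS kS.
  have N1 : ~ ((j.+1 = i :> nat) /\ (k = i.+1 :> nat)).
    case=> A B; move/negbT: C => /negP; apply.
    by apply/existsP; exists j; apply/existsP; exists k; rewrite jS kS A B !eqxx.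
  have N2 : ~ ((k.+1 = i :> nat) /\ (j = i.+1 :> nat)).
    case=> A B; move/negbT: C => /negP; apply.
    by apply/existsP; exists k; apply/existsP; exists j; rewrite jS kS A B !eqxx.
  move: (adjS HS jS kS) (pendS HS jS Hv) (pendS HS kS Hv).
  rewrite /nadj => A1 A2 A3.
  apply: f1_adj => //; lia.
move=> S1 S2 H1 H2.
have cross : forall S S', S \in R n r (inr i) -> S' \in R n r (inr i) ->
    case2 S -> ~~ case2 S' -> liftv (f2 i) @: S <> liftv (f1 i) @: S'.
  move=> S S' HS HS' C C' E.
  have [j0 [k0 [j0S k0S Ej0 Ek0]]] := C2P S C.
  have Hk : i.+1 < n by rewrite -Ek0.
  have := imset_f (liftv (f2 i)) j0S; have := imset_f (liftv (f2 i)) k0S.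
  rewrite E /= => /imset_inl[k [kS Ek]] /imset_inl[j [jS Ej]].
  move: (congr1 val Ej) (congr1 val Ek); rewrite !relabE //; try exact: Hr2.
  have -> : (j0 : nat) = i.-1 by lia.
  rewrite Ek0 f2_0 // f2_2 // => F1 F2.
  have := adjS HS' jS kS; rewrite /nadj (cross_nat Hi2 F1 F2) eqxx.
  done.
case: ifP => C1; case: ifP => C2 E.
- have Hk : i.+1 < n by have [j0 [k0 [_ _ _ Ek0]]] := C2P S1 C1; rewrite -Ek0.
  exact: (mapS_injS (Hr2 Hk) Hi2' E).
- by case: (cross _ _ H1 H2 C1 (negbT C2)).
- by case: (cross _ _ H2 H1 C2 (negbT C1)).
- exact: (mapS_injS Hr1 Hi1 E).
Qed.

Theorem theorem5 (n r : nat) (hn : 2 <= n) (hr1 : 1 <= r) (hrn : r <= n) :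
  (forall v : pvert n,
     #|rstar (@pendant_adj n) r v| <= #|rstar (@pendant_adj n) r (p_two hn)|) /\
  #|rstar (@pendant_adj n) r (p_two hn)| = #|rstar (@pendant_adj n) r (p_nm1 hn)|.
Proof.
have key : forall i : 'I_n, #|R n r (inr i)| <= #|R n r (p_two hn)|.
  move=> i; rewrite /p_two.
  case: (ltngtP i 1) => Hi.
  - by apply: stepSwap => //; apply/eqP; rewrite -leqn0 -ltnS.
  - by apply: stepC.
  - by rewrite (_ : i = Ordinal (two_idx_lt hn)) //; apply: val_inj.
split.
  case=> i; last exact: key.
  exact: leq_trans (stepA r i) (key i).
rewrite /p_two /p_nm1.
have [A B] := @stepRev n r hn (Ordinal (two_idx_lt hn)) (Ordinal (nm2_idx_lt hn)) erefl erefl.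
by apply/eqP; rewrite eqn_leq A B.
Qed.
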